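(* Let $G$ be a connected graph and $T$ a spanning tree of $G$ rooted in $s$. Then $T$ is an $\mathcal L$-tree of LexDFS on $G$ if and only if $T$ is an $\mathcal L$-tree of CompLexDFS on $G$. Likewise, $T$ is an $\mathcal L$-tree of LexBFS on $G$ if and only if $T$ is an $\mathcal L$-tree of CompLexBFS on $G$.
   Context: Graphs are finite, simple, undirected. LexDFS started at $s$: label $s$ with $(0)$, all others with the empty label; for $i=1,\dots,n$ pick an unnumbered vertex $v$ with lexicographically largest label, set $\sigma(i)=v$, and prepend $i$ to the label of each unnumbered neighbor of $v$. LexBFS started at $s$: label $s$ with $(n)$, others empty; same loop but append $n-i$ to the label of each unnumbered neighbor of $v$. CompLexDFS (resp. CompLexBFS) is the same as LexDFS (resp. LexBFS) except that the choice step becomes: choose a connected component $C$ of the subgraph induced by the unnumbered vertices and pick a vertex of $C$ with lexicographically largest label (among vertices of $C$). A $\mathcal P$-order is any possible output of search $\mathcal P$. The $\mathcal L$-tree of a vertex order $(v_1,\dots,v_n)$ is the spanning tree rooted at $v_1$ with an edge from each $v_i$ ($i>1$) to its rightmost neighbor $v_j$ with $j<i$. A spanning tree $T$ rooted at $s$ is an $\mathcal L$-tree of $\mathcal P$ on $G$ if some $\mathcal P$-order of $G$ starting at $s$ has $\mathcal L$-tree $T$ (same edge set and root). *)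

(* Defs.v *)
(* Simple graphs: symmetric irreflexive relation on a finType. *)
From mathcomp Require Import all_boot.
Set Implicit Arguments. Unset Strict Implicit. Unset Printing Implicit Defensive.

Section Defs.
Variable T : finType.

Fixpoint lex_le (a b : seq nat) : bool :=
  match a, b with
  | [::], _ => true
  | _ :: _, [::] => false
  | x :: a', y :: b' => (x < y) || ((x == y) && lex_le a' b')
  end.

(* Label of vertex v once the vertices of the prefix p have been numbered
   (p = [:: sigma(1); ...; sigma(i)], position j in p has number j.+1). *)

(* LexDFS: start label (0) for s; number k is prepended when the k-th vertex
   is a neighbour, so the numbers appear in decreasing order. *)
Definition lexdfs_label (e : rel T) (s : T) (p : seq T) (v : T) : seq nat :=
  rev [seq j.+1 | j <- iota 0 (size p) & e (nth v p j) v]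
  ++ (if v == s then [:: 0] else [::]).

(* LexBFS: start label (n) for s; n - k is appended when the k-th vertex is
   a neighbour. *)
Definition lexbfs_label (e : rel T) (s : T) (p : seq T) (v : T) : seq nat :=
  (if v == s then [:: #|T|] else [::])
  ++ [seq #|T| - j.+1 | j <- iota 0 (size p) & e (nth v p j) v].

Definition unnumbered_rel (e : rel T) (p : seq T) : rel T :=
  fun x y => [&& e x y, x \notin p & y \notin p].

Definition lex_choice (lab : seq T -> T -> seq nat) (p : seq T) (v : T) : Prop :=
  v \notin p /\ forall w, w \notin p -> lex_le (lab p w) (lab p v).

(* Component step: v is an unnumbered vertex whose label is largest among the
   vertices of its connected component C in the subgraph induced by the
   unnumbered vertices (choosing C and then such a vertex of C). *)
Definition comp_choice (e : rel T) (lab : seq T -> T -> seq nat)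
    (p : seq T) (v : T) : Prop :=
  v \notin p /\ forall w, w \notin p -> connect (unnumbered_rel e p) v w ->
    lex_le (lab p w) (lab p v).

Definition search_order (choice : seq T -> T -> Prop) (s : T) (sigma : seq T) : Prop :=
  size sigma = #|T| /\ nth s sigma 0 = s /\
  forall i, i < #|T| -> choice (take i sigma) (nth s sigma i).

Definition LexDFS_order (e : rel T) s sigma :=
  search_order (lex_choice (lexdfs_label e s)) s sigma.
Definition CompLexDFS_order (e : rel T) s sigma :=
  search_order (comp_choice e (lexdfs_label e s)) s sigma.
Definition LexBFS_order (e : rel T) s sigma :=
  search_order (lex_choice (lexbfs_label e s)) s sigma.
Definition CompLexBFS_order (e : rel T) s sigma :=
  search_order (comp_choice e (lexbfs_label e s)) s sigma.

(* Edge relation of the L-tree of the order sigma: an edge between v_i (i > 1)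
   and its rightmost earlier neighbour v_j (j < i); 0-based positions here. *)
Definition Ltree_edge (e : rel T) (sigma : seq T) (x y : T) : Prop :=
  exists i j, [/\ j < i, i < size sigma,
    e (nth x sigma j) (nth x sigma i),
    (forall k, j < k < i -> ~~ e (nth x sigma k) (nth x sigma i)) &
    (x = nth x sigma i /\ y = nth x sigma j \/
     x = nth x sigma j /\ y = nth x sigma i)].

Definition acyclic (t : rel T) : Prop :=
  forall c : seq T, uniq c -> 3 <= size c -> ~~ cycle t c.

Definition spanning_tree (e t : rel T) : Prop :=
  [/\ symmetric t, irreflexive t, (forall x y, t x y -> e x y),
      (forall x y, connect t x y) & acyclic t].

Definition is_Ltree (e : rel T) (order : T -> seq T -> Prop) (s : T) (t : rel T) : Prop :=
  exists sigma, order s sigma /\ nth s sigma 0 = s /\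
    forall x y, Ltree_edge e sigma x y <-> t x y.

End Defs.

(* Main.v *)
Require Import Defs.
From mathcomp Require Import all_boot zify.
Set Implicit Arguments. Unset Strict Implicit. Unset Printing Implicit Defensive.

Lemma lex_le_refl a : lex_le a a.
Proof. by elim: a => //= x a ->; rewrite eqxx orbT. Qed.

Lemma lex_le_trans a b c : lex_le a b -> lex_le b c -> lex_le a c.
Proof.
elim: a b c => [|x a IH] [|y b] [|z c] //=.
case/orP=> [lxy|/andP[/eqP-> lab]]; case/orP=> [lyz|/andP[/eqP<- lbc]].
- by rewrite (ltn_trans lxy lyz).
- by rewrite lxy.
- by rewrite lyz.
- by rewrite eqxx (IH _ _ lab lbc) orbT.
Qed.

Lemma lex_le_total a b : lex_le a b || lex_le b a.
Proof.
elim: a b => [|x a IH] [|y b] //=.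
case: (ltngtP x y) => //= Exy. 

Qed.

Lemma lex_map (A : eqType) (g g' : A -> nat) (a b : seq A) :
  {in a ++ b &, forall x y, (g x < g y) = (g' x < g' y)} ->
  lex_le (map g a) (map g b) = lex_le (map g' a) (map g' b).
Proof.
elim: a b => [|x a IH] [|y b] H; rewrite ?map_cons /=; [by []|by []|by []|].
have xin : x \in (x :: a) ++ y :: b by rewrite mem_cat mem_head.
have yin : y \in (x :: a) ++ y :: b by rewrite mem_cat mem_head orbT.
have Hxy := H _ _ xin yin.
have Hyx := H _ _ yin xin.
have Heq : (g x == g y) = (g' x == g' y).
  move: Hxy Hyx; case: (ltngtP (g x) (g y)) => //= E1;
  case: (ltngtP (g' x) (g' y)) => //= E2; by [].
rewrite Hxy Heq (IH b); first by [].
move=> u v Hu Hv; apply: H.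
  by move: Hu; rewrite !mem_cat !inE => /orP[] ->; rewrite ?orbT.
by move: Hv; rewrite !mem_cat !inE => /orP[] ->; rewrite ?orbT.
Qed.

Section ListLemmas.
Variable T : eqType.

Lemma index_cons (x z : T) l : index x (z :: l) = if z == x then 0 else (index x l).+1.
Proof. by []. Qed.

Lemma index_filter_lt (N : pred T) (l : seq T) x y : N x -> N y ->
  (index x l < index y l) = (index x (filter N l) < index y (filter N l)).
Proof.
move=> Nx Ny; elim: l => [|z l IH]; first by [].
have -> : filter N (z :: l) = if N z then z :: filter N l else filter N l by [].
rewrite !index_cons; case Nz: (N z); rewrite ?index_cons.
  by case: (z == x); case: (z == y); rewrite ?ltnS.
have zx : (z == x) = false by apply/eqP => E; rewrite E Nx in Nz.
have zy : (z == y) = false by apply/eqP => E; rewrite E Ny in Nz.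
by rewrite zx zy ltnS.
Qed.

Lemma filter_sub_eq (P Q : pred T) (l : seq T) :
  {in l, forall x, P x -> Q x} -> filter P (filter Q l) = filter P l.
Proof.
move=> H; rewrite -filter_predI; apply: eq_in_filter => x xl /=.
by case Px: (P x) => //=; rewrite (H x xl Px).
Qed.

Lemma filter_disj_nil (P Q : pred T) (l : seq T) :
  {in l, forall x, P x -> ~~ Q x} -> filter P (filter Q l) = [::].
Proof.
move=> H; rewrite -filter_predI -(filter_pred0 l); apply: eq_in_filter => x xl /=.
by case Px: (P x) => //=; rewrite (negbTE (H x xl Px)).
Qed.

Lemma split_cat (p l q r : seq T) v : p ++ l = q ++ v :: r ->
  (exists q2, p = q ++ v :: q2) \/ (exists l1, q = p ++ l1 /\ l = l1 ++ v :: r).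
Proof.
elim: p q => [|x p IH] q /=.
  by move=> ->; right; exists q.
case: q => [|y q] /= [<-] E.
  by left; exists p.
case: (IH q E) => [[q2 ->]|[l1 [-> ->]]].
  by left; exists q2.
by right; exists l1.
Qed.

Lemma split_filter (D : pred T) (r a1 a2 : seq T) v : filter D r = a1 ++ v :: a2 ->
  exists r1 r2, r = r1 ++ v :: r2 /\ filter D r1 = a1.
Proof.
elim: r a1 => [|x r IH] a1 /=; first by case: a1.
case Dx: (D x).
  case: a1 => [|y a1] /= [<-] E.
    by exists [::], r.
  have [r1 [r2 [-> <-]]] := IH _ E.
  by exists (x :: r1), r2; rewrite /= Dx.
move=> E; have [r1 [r2 [-> <-]]] := IH _ E.
by exists (x :: r1), r2; rewrite /= Dx.
Qed.

Lemma idx_lt_cat (p l : seq T) x y : (x \in p) || (y \in p) ->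
  (index x (p ++ l) < index y (p ++ l)) = (index x p < index y p).
Proof.
rewrite !index_cat; case xp: (x \in p); case yp: (y \in p) => //= _.
- by rewrite (memNindex (negbT yp)) index_mem xp ltn_addr // index_mem.
- rewrite (memNindex (negbT xp)); apply/idP/idP => H.
    by have := index_mem y p; rewrite yp; move: H; lia.
  by have := index_mem y p; rewrite yp; move: H; lia.
Qed.

End ListLemmas.
Arguments idx_lt_cat {T} p l x y _.

Lemma connect_restrict (T : finType) (r1 r2 : rel T) (P : pred T) x y :
  P x -> (forall a b, P a -> r1 a b -> P b && r2 a b) ->
  connect r1 x y -> connect r2 x y && P y.
Proof.
move=> Px H /connectP [q pq ->]; elim: q x Px pq => [|z q IH] x Px /=.
  by rewrite connect0 Px.
case/andP=> xz pq; case/andP: (H _ _ Px xz) => Pz r2xz.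
case/andP: (IH z Pz pq) => c ->; rewrite andbT.
exact: connect_trans (connect1 r2xz) c.
Qed.

Section Labels.
Variable T : finType.
Variables (e : rel T) (s : T).

Definition lab_inv (lab : seq T -> T -> seq nat) := forall p p' v w,
  uniq p -> uniq p' ->
  filter [pred x | e x v || e x w] p = filter [pred x | e x v || e x w] p' ->
  lex_le (lab p v) (lab p w) = lex_le (lab p' v) (lab p' w).

Lemma iota_filter (f : nat -> nat) (P : pred T) (p : seq T) v : uniq p ->
  [seq f j | j <- iota 0 (size p) & P (nth v p j)] = [seq f (index x p) | x <- filter P p].
Proof.
move=> up; rewrite -[in filter P p](mkseq_nth v p) /mkseq filter_map -map_comp.
apply/eq_in_map => j; rewrite mem_filter mem_iota => /andP[_ lt] /=.
by rewrite index_uniq.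
Qed.

Lemma size_uniq_le (p : seq T) : uniq p -> size p <= #|T|.
Proof. by move/card_uniqP <-; apply: max_card. Qed.

Definition gd (p : seq T) (o : option T) := if o is Some x then (index x p).+1 else 0.
Definition Ld (q : seq T) v := map Some (rev (filter (e^~ v) q)) ++ (if v == s then [:: None] else [::]).

Lemma dfs_lab (N : pred T) p v : uniq p -> (forall x, e x v -> N x) ->
  lexdfs_label e s p v = map (gd p) (Ld (filter N p) v).
Proof.
move=> up H; rewrite /lexdfs_label /Ld map_cat.
rewrite (iota_filter (fun j => j.+1) (e^~ v)) // filter_sub_eq; last by move=> x _ /H.
rewrite -map_comp map_rev; congr (_ ++ _); by case: (v == s).
Qed.

Lemma dfs_inv : lab_inv (lexdfs_label e s).
Proof.
move=> p p' v w up up' EN.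
pose N : pred T := fun x => e x v || e x w.
have {}EN : filter N p = filter N p' by [].
have Nv : forall x, e x v -> N x by move=> x; rewrite /N => ->.
have Nw : forall x, e x w -> N x by move=> x; rewrite /N => ->; rewrite orbT.
rewrite (@dfs_lab N p v up Nv) (@dfs_lab N p w up Nw) (@dfs_lab N p' v up' Nv) (@dfs_lab N p' w up' Nw) EN.
apply: lex_map => o1 o2.
have memL : forall u o, o \in Ld (filter N p') u -> is_true (if o is Some x then (x \in p) && (x \in p') && N x else true).
  move=> u [x|] //; rewrite /Ld mem_cat => /orP[]; last by case: (u == s).
  rewrite mem_map; last by move=> ? ? [].
  rewrite mem_rev mem_filter => /andP[_ xq]; have xq' := xq; rewrite -EN in xq'.
  by move: xq xq'; rewrite !mem_filter => /andP[-> ->] /andP[_ ->].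
move=> H1 H2.
have M1 : is_true (if o1 is Some x then (x \in p) && (x \in p') && N x else true).
  by move: H1; rewrite mem_cat => /orP[] /memL.
have M2 : is_true (if o2 is Some x then (x \in p) && (x \in p') && N x else true).
  by move: H2; rewrite mem_cat => /orP[] /memL.
clear H1 H2; case: o1 M1 => [x|]; case: o2 M2 => [y|] //=.
move=> /andP[/andP[_ _] Ny] /andP[/andP[_ _] Nx].
by rewrite !ltnS (index_filter_lt p Nx Ny) (index_filter_lt p' Nx Ny) EN.
Qed.

Definition gb (p : seq T) (o : option T) := if o is Some x then #|T| - (index x p).+1 else #|T|.
Definition Lb (q : seq T) v := (if v == s then [:: None] else [::]) ++ map Some (filter (e^~ v) q).

Lemma bfs_lab (N : pred T) p v : uniq p -> (forall x, e x v -> N x) ->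
  lexbfs_label e s p v = map (gb p) (Lb (filter N p) v).
Proof.
move=> up H; rewrite /lexbfs_label /Lb map_cat.
rewrite (iota_filter (fun j => #|T| - j.+1) (e^~ v)) // filter_sub_eq; last by move=> x _ /H.
rewrite -map_comp; congr (_ ++ _); by case: (v == s).
Qed.

Lemma bfs_inv : lab_inv (lexbfs_label e s).
Proof.
move=> p p' v w up up' EN.
pose N : pred T := fun x => e x v || e x w.
have {}EN : filter N p = filter N p' by [].
have Nv : forall x, e x v -> N x by move=> x; rewrite /N => ->.
have Nw : forall x, e x w -> N x by move=> x; rewrite /N => ->; rewrite orbT.
rewrite (@bfs_lab N p v up Nv) (@bfs_lab N p w up Nw) (@bfs_lab N p' v up' Nv) (@bfs_lab N p' w up' Nw) EN.
apply: lex_map => o1 o2.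
have memL : forall u o, o \in Lb (filter N p') u -> is_true (if o is Some x then (x \in p) && (x \in p') && N x else true).
  move=> u [x|] //; rewrite /Lb mem_cat => /orP[]; first by case: (u == s).
  rewrite mem_map; last by move=> ? ? [].
  rewrite mem_filter => /andP[_ xq]; have xq' := xq; rewrite -EN in xq'.
  by move: xq xq'; rewrite !mem_filter => /andP[-> ->] /andP[_ ->].
move=> H1 H2.
have M1 : is_true (if o1 is Some x then (x \in p) && (x \in p') && N x else true).
  by move: H1; rewrite mem_cat => /orP[] /memL.
have M2 : is_true (if o2 is Some x then (x \in p) && (x \in p') && N x else true).
  by move: H2; rewrite mem_cat => /orP[] /memL.
have sp := size_uniq_le up; have sp' := size_uniq_le up'.
have key : forall a b, a < #|T| -> b < #|T| -> (#|T| - a.+1 < #|T| - b.+1) = (b < a).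
  by move=> a b ha hb; apply/idP/idP; lia.
clear H1 H2; case: o1 M1 => [x|]; case: o2 M2 => [y|] /=.
- move=> /andP[/andP[yp yp'] Ny] /andP[/andP[xp xp'] Nx].
  have h1 : index x p < size p by rewrite index_mem.
  have h2 : index y p < size p by rewrite index_mem.
  have h3 : index x p' < size p' by rewrite index_mem.
  have h4 : index y p' < size p' by rewrite index_mem.
  have k1 := leq_trans h1 sp.
  have k2 := leq_trans h2 sp.
  have k3 := leq_trans h3 sp'.
  have k4 := leq_trans h4 sp'.
  rewrite (key _ _ k1 k2) (key _ _ k3 k4).
  by rewrite (index_filter_lt p Ny Nx) (index_filter_lt p' Ny Nx) EN.
- move=> _ /andP[/andP[xp xp'] _].
  have h1 : index x p < size p by rewrite index_mem.
  have h3 : index x p' < size p' by rewrite index_mem.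
  have k1 := leq_trans h1 sp; have k3 := leq_trans h3 sp'.
  apply/idP/idP; lia.
- move=> /andP[/andP[yp yp'] _] _.
  have h2 : index y p < size p by rewrite index_mem.
  have h4 : index y p' < size p' by rewrite index_mem.
  have k1 := leq_trans h2 sp; have k3 := leq_trans h4 sp'.
  apply/idP/idP; lia.
- by [].
Qed.

Lemma dfs_init w : lex_le (lexdfs_label e s [::] w) (lexdfs_label e s [::] s).
Proof. case: (w =P s) => [->|/eqP/negbTE ws]; first exact: lex_le_refl. by rewrite /lexdfs_label /= ws. Qed.

Lemma bfs_init w : lex_le (lexbfs_label e s [::] w) (lexbfs_label e s [::] s).
Proof. case: (w =P s) => [->|/eqP/negbTE ws]; first exact: lex_le_refl. by rewrite /lexbfs_label /= ws. Qed.

End Labels.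

Section Generic.
Variable T : finType.
Variable e : rel T.

Definition valid (choice : seq T -> T -> Prop) (sg : seq T) :=
  forall q v r, sg = q ++ v :: r -> choice q v.

Definition par (sg : seq T) (b a : T) : bool :=
  [&& index a sg < index b sg, e a b &
      [forall z, (index a sg < index z sg < index b sg) ==> ~~ e z b]].

Lemma par_prefix (p l : seq T) (b a : T) : b \in p -> par (p ++ l) b a = par p b a.
Proof.
move=> bp; rewrite /par (idx_lt_cat p l a b); last by rewrite bp orbT.
congr [&& _, _ & _]; apply: eq_forallb => z.
case zp: (z \in p).
  rewrite (idx_lt_cat p l a z); last by rewrite zp orbT.
  by rewrite (idx_lt_cat p l z b) // zp.
rewrite (idx_lt_cat p l z b); last by rewrite bp orbT.
have -> : (index z p < index b p) = false.
  apply/negbTE; rewrite -leqNgt (memNindex (negbT zp)) ltnW // index_mem //.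
by rewrite !andbF.
Qed.

Lemma par_filter (M : pred T) s1 s2 b a : M b -> (forall z, e z b -> M z) ->
  filter M s1 = filter M s2 -> par s1 b a = par s2 b a.
Proof.
move=> Mb HM EF; case eab: (e a b); last by rewrite /par eab !andbF.
have Ma := HM a eab.
rewrite /par (index_filter_lt s1 Ma Mb) (index_filter_lt s2 Ma Mb) EF.
congr [&& _, _ & _]; apply: eq_forallb => z.
case ezb: (e z b); last by rewrite !implybT.
have Mz := HM z ezb.
by rewrite (index_filter_lt s1 Ma Mz) (index_filter_lt s1 Mz Mb)
  (index_filter_lt s2 Ma Mz) (index_filter_lt s2 Mz Mb) EF.
Qed.

Lemma ltree_par (sg : seq T) (x y : T) : uniq sg -> (forall z, z \in sg) ->
  (Ltree_edge e sg x y <-> par sg x y \/ par sg y x).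
Proof.
move=> usg allin.
have H1 : forall i j, j < i -> i < size sg -> e (nth x sg j) (nth x sg i) ->
    (forall k, j < k < i -> ~~ e (nth x sg k) (nth x sg i)) ->
    par sg (nth x sg i) (nth x sg j).
  move=> i j ji isz ej nk.
  have jsz : j < size sg by apply: ltn_trans ji isz.
  rewrite /par (index_uniq x jsz usg) (index_uniq x isz usg) ji ej /=.
  apply/forallP => z; apply/implyP => hz.
  rewrite -{1}(nth_index x (allin z)); apply: nk.
  by have ksz : index z sg < size sg by rewrite index_mem.
split.
  move=> [i [j [ji isz ej nk [[E1 E2]|[E1 E2]]]]];
  have := H1 i j ji isz ej nk; rewrite -E1 -E2.
    by move=> h; left.
  by move=> h; right.
have H2 : forall b a, par sg b a -> exists i j, [/\ j < i, i < size sg,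
    e (nth x sg j) (nth x sg i),
    (forall k, j < k < i -> ~~ e (nth x sg k) (nth x sg i)) &
    b = nth x sg i /\ a = nth x sg j].
  move=> b a /and3P[ji eab /forallP hz].
  exists (index b sg), (index a sg).
  rewrite !nth_index //; split => //; first by rewrite index_mem.
  move=> k /andP[h1 h2].
  have ksz : k < size sg by apply: ltn_trans h2 _; rewrite index_mem.
  have := hz (nth x sg k); rewrite index_uniq // h1 h2 //.
case=> [/H2 [i [j [a1 a2 a3 a4 [E1 E2]]]]|/H2 [i [j [a1 a2 a3 a4 [E1 E2]]]]].
  by exists i, j; split => //; left; split.
by exists i, j; split => //; right; split.
Qed.

Lemma search_split (choice : seq T -> T -> Prop) s sg :
  search_order choice s sg <-> [/\ size sg = #|T|, nth s sg 0 = s & valid choice sg].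
Proof.
split.
  move=> [sz [n0 H]]; split => // q v r E.
  have := H (size q); rewrite -sz E size_cat /= addnS ltnS leq_addr take_size_cat //.
  by rewrite nth_cat ltnn subnn /=; apply.
move=> [sz n0 H]; split => //; split => // i isz.
apply: (H _ _ (drop i.+1 sg)).
by rewrite -drop_nth ?sz // cat_take_drop.
Qed.

Lemma valid_uniq (choice : seq T -> T -> Prop) sg :
  (forall (q : seq T) (v : T), choice q v -> v \notin q) -> valid choice sg -> uniq sg.
Proof.
move=> Hc; elim/last_ind: sg => [|sg x IH] // H.
rewrite rcons_uniq; apply/andP; split.
  by apply: (Hc _ _ (H sg x [::] _)); rewrite cats1.
apply: IH => q v r E; apply: (H q v (rcons r x)).
by rewrite E rcons_cat.
Qed.

Lemma all_in (sg : seq T) : uniq sg -> size sg = #|T| -> forall x, x \in sg.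
Proof.
move=> u sz x; apply/negPn/negP => xn.
have : uniq (x :: sg) by rewrite /= xn u.
by move/size_uniq_le; rewrite /= sz ltnn.
Qed.

Lemma exists_max (f : T -> seq nat) (l : seq T) : l != [::] ->
  exists2 u, u \in l & forall w, w \in l -> lex_le (f w) (f u).
Proof.
elim: l => [|x l IH] // _.
case: l IH => [|y l] IH.
  by exists x; rewrite ?mem_head // => w; rewrite inE => /eqP ->; apply: lex_le_refl.
have [u ul Hu] := IH isT.
case/orP: (lex_le_total (f x) (f u)) => H.
  exists u; first by rewrite inE ul orbT.
  by move=> w; rewrite inE => /orP[/eqP ->|/Hu].
exists x; first exact: mem_head.
move=> w; rewrite inE => /orP[/eqP ->|/Hu L]; first exact: lex_le_refl.
exact: lex_le_trans L H.
Qed.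

Lemma mem_size_gt0 (l : seq T) (x : T) : x \in l -> 0 < size l.
Proof. by case: l. Qed.

Lemma uniq_split_notin (q r : seq T) (v : T) : uniq (q ++ v :: r) -> v \notin q.
Proof.
rewrite cat_uniq => /and3P[_ /hasPn H _].
by have := H v (mem_head v r).
Qed.

Lemma uniq_split_pref (q r : seq T) : uniq (q ++ r) -> uniq q.
Proof. by rewrite cat_uniq => /and3P[]. Qed.

End Generic.

Section Main.
Variable T : finType.
Variables (e : rel T) (lab : seq T -> T -> seq nat).
Hypothesis esym : symmetric e.
Hypothesis linv : lab_inv e lab.

Definition lexpref (sg : seq T) m :=
  forall q v r, sg = q ++ v :: r -> size q < m -> lex_choice lab q v.

Lemma step (sg : seq T) m : uniq sg -> (forall x, x \in sg) ->
  valid (comp_choice e lab) sg -> lexpref sg m -> m < size sg ->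
  exists sg', [/\ perm_eq sg' sg, valid (comp_choice e lab) sg',
    lexpref sg' m.+1, take m sg' = take m sg & forall b a, par e sg' b a = par e sg b a].
Proof.
move=> usg allin vc lp msz.
pose p := take m sg; pose r := drop m sg.
have Esg : sg = p ++ r by rewrite cat_take_drop.
have sp : size p = m by rewrite size_takel // ltnW.
have disj : forall x, x \in r -> x \notin p.
  move=> x xr; move: usg; rewrite Esg cat_uniq => /and3P[_ /hasPn H _].
  exact: H.
have inr : forall x, x \notin p -> x \in r.
  by move=> x xp; move: (allin x); rewrite Esg mem_cat (negbTE xp).
have rne : r != [::].
  by rewrite -size_eq0 size_drop -lt0n subn_gt0.
have [u ur umax] := exists_max (lab p) rne.
pose U := unnumbered_rel e p.
pose D : pred T := fun x => connect U u x.
have unp : forall x y, connect U x y -> x \notin p -> y \notin p.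
  move=> x y /connectP [q pq ->]; elim: q x pq => [|z q IH] x //=.
  by case/andP=> /and3P[_ _ zp] pq _; apply: IH.
have up : u \notin p := disj u ur.
have Dnp : forall x, D x -> x \notin p.
  by move=> x Dx; apply: (unp u x Dx up).
have DE : forall x y, D x -> y \notin p -> e x y -> D y.
  move=> x y Dx yp exy; apply: (connect_trans Dx (connect1 _)).
  by rewrite /U /unnumbered_rel exy (Dnp x Dx) yp.
have DE' : forall x y, D y -> x \notin p -> e x y -> D x.
  by move=> x y Dy xp exy; apply: (DE y x Dy xp); rewrite esym.
have Usym : symmetric U.
  move=> x y; rewrite /U /unnumbered_rel esym.
  by case: (x \in p); case: (y \in p); rewrite ?andbF ?andbT.
pose A := filter D r.
pose B := filter (predC D) r.
pose sg' := p ++ A ++ B.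
have perm' : perm_eq sg' sg by rewrite Esg perm_cat2l perm_filterC.
have usg' : uniq sg' by rewrite (perm_uniq perm').
have uinA : u \in A by rewrite mem_filter /D connect0.
suff key : forall q v r', sg' = q ++ v :: r' ->
    comp_choice e lab q v /\ (size q < m.+1 -> lex_choice lab q v).
  exists sg'; split => //.
  - by move=> q v r' E; case: (key q v r' E).
  - by move=> q v r' E; case: (key q v r' E).
  - by rewrite /sg' (take_size_cat _ sp).
  move=> b a; case bp: (b \in p).
    by rewrite Esg !par_prefix.
  pose M : pred T := fun z => e z b || (z == b).
  have br : b \in r by apply: inr; rewrite bp.
  apply: (par_filter (M := M)); first by rewrite /M eqxx orbT.
    by move=> z ezb; rewrite /M ezb.
  rewrite Esg !filter_cat; congr (_ ++ _).
  case Db: (D b).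
    have HM : {in r, forall x, M x -> D x}.
      move=> x xr /orP[exb|/eqP ->] //.
      by apply: DE' Db (disj x xr) exb.
    rewrite (@filter_disj_nil _ M (predC D)); last by move=> x xr Mx; rewrite /= negbK HM.
    by rewrite cats0 filter_sub_eq.
  have HM : {in r, forall x, M x -> ~~ D x}.
    move=> x xr /orP[exb|/eqP ->]; last by rewrite Db.
    by apply/negP => Dx; move: (DE x b Dx (negbT bp) exb); rewrite Db.
  by rewrite (@filter_disj_nil _ M D) // filter_sub_eq.
move=> q v r' E.
have vq : v \notin q by apply: (@uniq_split_notin _ q r'); rewrite -E.
have uq : uniq q by apply: (@uniq_split_pref _ q (v :: r')); rewrite -E.
case: (split_cat E) => [[q2 Ep]|[l1 [Eq El]]].
  have Es : sg = q ++ v :: (q2 ++ r) by rewrite Esg Ep -catA.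
  split; first exact: vc Es.
  move=> _; apply: (lp _ _ _ Es); rewrite -sp Ep size_cat /= addnS ltnS leq_addr //.
case: (split_cat El) => [[a2 EA]|[b1 [El1 EB]]].
  have [r1 [r2 [Er El1]]] := split_filter EA.
  have Dv : D v.
    have : v \in A by rewrite EA mem_cat mem_head orbT.
    by rewrite mem_filter => /andP[].
  have Es : sg = (p ++ r1) ++ v :: r2 by rewrite Esg Er catA.
  have [vn cc] := vc _ _ _ Es.
  have ur1 : uniq (p ++ r1) by apply: (@uniq_split_pref _ _ (v :: r2)); rewrite -Es.
  have r1r : forall x, x \in r1 -> x \in r by move=> x xr1; rewrite Er mem_cat xr1.
  have np : forall x, x \notin q -> D x -> x \notin p ++ r1.
    move=> x xq Dx; rewrite mem_cat negb_or (Dnp x Dx) /=.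
    apply/negP => xr1; move: xq; rewrite Eq mem_cat -El1 mem_filter xr1 Dx orbT.
    by [].
  have CC : comp_choice e lab q v.
    split => // w wn cw.
    have stp : forall a b, D a -> unnumbered_rel e q a b -> D b && unnumbered_rel e (p ++ r1) a b.
      move=> a b Da /and3P[eab an bn].
      have Db : D b by apply: (DE a b Da) => //; move: bn; rewrite Eq mem_cat negb_or => /andP[].
      by rewrite Db /unnumbered_rel eab (np a an Da) (np b bn Db).
    have /andP[cw' Dw] := connect_restrict Dv stp cw.
    have L := cc w (np w wn Dw) cw'.
    rewrite (linv (p' := p ++ r1)) //.
    rewrite Eq !filter_cat; congr (_ ++ _); rewrite -El1 filter_sub_eq //.
    move=> x xr1 /= /orP[] ex; [apply: (DE' x w) | apply: (DE' x v)] => //;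
    exact: disj (r1r x xr1).
  split => // sq; have l10 : l1 = [::].
    by apply/eqP; rewrite -size_eq0; move: sq; rewrite Eq size_cat sp -[m.+1]addn1 ltn_add2l ltnS leqn0.
  have Eqp : q = p by rewrite Eq l10 cats0.
  split => // w wn.
  rewrite Eqp in wn CC *.
  apply: (lex_le_trans (umax w (inr w wn))).
  case: CC => _ CC; apply: CC => //.
  by have := sym_connect_sym Usym v u; rewrite /U => ->.
have [r1 [r2 [Er Eb1]]] := split_filter EB.
have nDv : ~~ D v.
  have : v \in B by rewrite EB mem_cat mem_head orbT.
  by rewrite mem_filter => /andP[].
have Es : sg = (p ++ r1) ++ v :: r2 by rewrite Esg Er catA.
have [vn cc] := vc _ _ _ Es.
have r1r : forall x, x \in r1 -> x \in r by move=> x xr1; rewrite Er mem_cat xr1.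
have np : forall x, x \notin q -> x \notin p ++ r1.
  move=> x; rewrite Eq El1 !mem_cat !negb_or => /and3P[-> xA xb1] /=.
  apply/negP => xr1; case Dx: (D x).
    by move: xA; rewrite mem_filter Dx (r1r x xr1).
  by move: xb1; rewrite -Eb1 mem_filter /= Dx xr1.
have ur1 : uniq (p ++ r1) by apply: (@uniq_split_pref _ _ (v :: r2)); rewrite -Es.
have CC : comp_choice e lab q v.
  split => // w wn cw.
  have stp : forall a b, predT a -> unnumbered_rel e q a b -> predT b && unnumbered_rel e (p ++ r1) a b.
    move=> a b _ /and3P[eab an bn].
    by rewrite /unnumbered_rel eab (np a an) (np b bn).
  have /andP[cw' _] := @connect_restrict _ _ _ predT v w isT stp cw.
  have L := cc w (np w wn) cw'.
  have wp : w \notin p by move: wn; rewrite Eq mem_cat negb_or => /andP[].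
  have ND : forall x, x \in r -> e x w || e x v -> ~~ D x.
    move=> x xr /orP[] ex; apply/negP => Dx.
      have Dw := DE x w Dx wp ex.
      by move: wn; rewrite Eq El1 !mem_cat mem_filter Dw (inr w wp) /= !orbT.
    have vp : v \notin p by move: vn; rewrite mem_cat negb_or => /andP[].
    by move: nDv; rewrite (DE x v Dx vp ex).
  rewrite (linv (p' := p ++ r1)) //.
  rewrite Eq El1 !filter_cat; congr (_ ++ _).
  rewrite (@filter_disj_nil _ _ D) /=; last by move=> x xr; apply: ND.
  rewrite -Eb1 filter_sub_eq // => x xr1 H; exact: (ND x (r1r x xr1) H).
split => // sq; exfalso.
move: sq; rewrite Eq El1 !size_cat sp.
have := mem_size_gt0 uinA; lia.
Qed.

Lemma iterate k : forall (sg : seq T) m, size sg - m <= k -> uniq sg -> (forall x, x \in sg) ->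
  valid (comp_choice e lab) sg -> lexpref sg m ->
  exists sg', [/\ perm_eq sg' sg, valid (lex_choice lab) sg',
    take m sg' = take m sg & forall b a, par e sg' b a = par e sg b a].
Proof.
elim: k => [|k IH] sg m hk usg allin vc lp.
  exists sg; split => // q v r E; apply: (lp _ _ _ E).
  by move: hk; rewrite E size_cat /=; lia.
case: (leqP (size sg) m) => hm.
  exists sg; split => // q v r E; apply: (lp _ _ _ E).
  by move: hm; rewrite E size_cat /=; lia.
have [sg1 [pm vc1 lp1 tk1 par1]] := step usg allin vc lp hm.
have hk1 : size sg1 - m.+1 <= k by rewrite (perm_size pm) subnS -subn1 leq_subLR add1n.
have u1 : uniq sg1 by rewrite (perm_uniq pm).
have all1 : forall x, x \in sg1 by move=> x; rewrite (perm_mem pm).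
have [sg2 [pm2 vl2 tk2 par2]] := IH sg1 m.+1 hk1 u1 all1 vc1 lp1.
exists sg2; split.
- exact: perm_trans pm2 pm.
- exact: vl2.
- by rewrite -(take_takel sg2 (leqnSn m)) tk2 take_takel.
- by move=> b a; rewrite par2 par1.
Qed.

Lemma comp_to_lex (s : T) (sg : seq T) :
  (forall w, lex_le (lab [::] w) (lab [::] s)) ->
  search_order (comp_choice e lab) s sg ->
  exists sg', search_order (lex_choice lab) s sg' /\
    forall x y, Ltree_edge e sg' x y <-> Ltree_edge e sg x y.
Proof.
move=> init /search_split [sz n0 vc].
have usg : uniq sg by apply: (valid_uniq (choice := comp_choice e lab)) => // q v [].
have allin := all_in usg sz.
have lp : lexpref sg 1.
  move=> q v r E; case: q E => [|? ?] E // _.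
  have vs : v = s by rewrite -n0 E.
  by rewrite vs; split.
have [sg' [pm vl tk pr]] := @iterate (size sg - 1) sg 1 (leqnn _) usg allin vc lp.
have u' : uniq sg' by rewrite (perm_uniq pm).
have all' : forall x, x \in sg' by move=> x; rewrite (perm_mem pm).
exists sg'; split.
  apply/search_split; split => //; first by rewrite (perm_size pm).
  by rewrite -(nth_take s (ltnSn 0)) tk nth_take.
move=> x y; rewrite (ltree_par _ _ _ u' all') (ltree_par _ _ _ usg allin) !pr.
by [].
Qed.

End Main.

Lemma lex2comp (T : finType) (e : rel T) (lab : seq T -> T -> seq nat) s sg :
  search_order (lex_choice lab) s sg -> search_order (comp_choice e lab) s sg.
Proof.
move=> [sz [n0 H]]; split => //; split => // i hi.
by case: (H i hi) => a b; split => // w wn _; apply: b.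
Qed.

Theorem lemma14 (T : finType) (e : rel T) (s : T) (t : rel T) :
  symmetric e -> irreflexive e -> (forall x y, connect e x y) ->
  spanning_tree e t ->
  (is_Ltree e (LexDFS_order e) s t <-> is_Ltree e (CompLexDFS_order e) s t) /\
  (is_Ltree e (LexBFS_order e) s t <-> is_Ltree e (CompLexBFS_order e) s t).
Proof.
move=> esym _ _ _; split; split.
- move=> [sg [o [n0 H]]]; exists sg; split => //; exact: lex2comp.
- move=> [sg [o [n0 H]]].
  have [sg' [o' E]] := comp_to_lex esym (@dfs_inv T e s) (@dfs_init T e s) o.
  exists sg'; split => //; split; first by case: o' => _ [? _].
  by move=> x y; rewrite E; apply: H.
- move=> [sg [o [n0 H]]]; exists sg; split => //; exact: lex2comp.
- move=> [sg [o [n0 H]]].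
  have [sg' [o' E]] := comp_to_lex esym (@bfs_inv T e s) (@bfs_init T e s) o.
  exists sg'; split => //; split; first by case: o' => _ [? _].
  by move=> x y; rewrite E; apply: H.
Qed.
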